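(* Let $\mu$ be critical, let $\xi_1,\dots,\xi_n$ be i.i.d. with law $\mu$, and let $\bar\xi_1,\bar\xi_2,\dots$ be i.i.d. with the size-biased law of $\xi_1$. Then for $1\le m<n$ and any non-negative measurable $f:\mathbb Z^m\to\mathbb R_+$, $$\mathbb E\big[f(\widehat D^n_1,\dots,\widehat D^n_m)\mathbf 1\{N_n\ge m\}\big]=\mathbb E\big[f(\bar\xi_1,\dots,\bar\xi_m)\,\Theta^n(\bar\xi_1,\dots,\bar\xi_m)\big],$$ where for $k_1,\dots,k_m\in\mathbb N$ with $k_1+\dots+k_m\le n-1$, $$\Theta^n(k_1,\dots,k_m)=\frac{\mathbb P\big(\sum_{i=m+1}^n\xi_i=n-1-\sum_{i=1}^mk_i\big)}{\mathbb P\big(\sum_{i=1}^n\xi_i=n-1\big)}\prod_{i=1}^m\frac{n-i+1}{n-1-\sum_{j=1}^{i-1}k_j},$$ and $\Theta^n(k_1,\dots,k_m)=0$ otherwise.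
   Context: $\mu$ is a law on $\mathbb Z_{\ge0}$ with support of gcd $1$; critical means mean $1$; the size-biased law is $\mathbb P(\bar\xi=k)=k\mu_k$. $D^n=(D^n_1,\dots,D^n_n)$ is a vector of i.i.d. $\mu$-distributed variables conditioned on $\sum_iD^n_i=n-1$, and $N_n=|\{i\in[n]:D^n_i>0\}|$. Size-biased random re-ordering of positive numbers $(k_1,\dots,k_N)$: the random permutation $\Sigma$ of $[N]$ with $\mathbb P(\Sigma=\sigma)=\prod_{i=1}^N k_{\sigma(i)}/\sum_{j=i}^Nk_{\sigma(j)}$, giving $(k_{\Sigma(1)},\dots,k_{\Sigma(N)})$. $\widehat D^n=(\widehat D^n_1,\dots,\widehat D^n_{N_n})$ is the size-biased random re-ordering of the positive entries of $D^n$. *)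

(* Defs.v *)
From HB Require Import structures.
From mathcomp Require Import all_boot all_order all_algebra all_fingroup.
From mathcomp Require Import all_classical all_reals all_analysis.
Set Implicit Arguments. Unset Strict Implicit. Unset Printing Implicit Defensive.
Import Order.TTheory GRing.Theory Num.Theory.
Import numFieldNormedType.Exports.
Local Open Scope classical_set_scope.
Local Open Scope ring_scope.

(* A law mu on Z_{>=0} is given by its mass function mu : nat -> R. *)
Definition is_law (R : realType) (mu : nat -> R) : Prop :=
  (forall k, 0 <= mu k) /\ (fun N : nat => \sum_(k < N) mu k) @ \oo --> (1 : R).

Definition support_gcd1 (R : realType) (mu : nat -> R) : Prop :=
  forall d : nat, (forall k, 0 < mu k -> (d %| k)%N) -> d = 1%N.

Definition critical (R : realType) (mu : nat -> R) : Prop :=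
  (fun N : nat => \sum_(k < N) k%:R * mu k) @ \oo --> (1 : R).

(* conv_pow mu r j = P(xi_1 + ... + xi_r = j) for xi_i i.i.d. with law mu *)
Fixpoint conv_pow (R : realType) (mu : nat -> R) (r : nat) (j : nat) : R :=
  match r with
  | O => if j == 0%N then 1 else 0
  | r'.+1 => \sum_(i < j.+1) mu i * conv_pow mu r' (j - i)
  end.

Definition pos_entries (n : nat) (d : {ffun 'I_n -> 'I_n}) : seq nat :=
  [seq (d i : nat) | i <- enum 'I_n & (0 < d i)%N].

(* probability of the permutation sigma under the size-biased random
   re-ordering of the positive numbers s = (k_1,...,k_N) (0-indexed) *)
Definition sb_perm_prob (R : realType) (s : seq nat) (sigma : 'S_(size s)) : R :=
  \prod_(i < size s)
    ((nth 0%N s (sigma i))%:R /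
       \sum_(j < size s | (i <= j)%N) (nth 0%N s (sigma j))%:R).

Definition sb_reorder (s : seq nat) (sigma : 'S_(size s)) : seq nat :=
  [seq nth 0%N s (sigma i) | i <- enum 'I_(size s)].

(* E[ f(hatD^n_1..hatD^n_m) 1{N_n >= m} ], the law of D^n being
   P(D^n = d) = prod_i mu(d_i) / P(xi_1+...+xi_n = n-1) on {sum d = n-1}
   (all such d have entries <= n-1, hence d : 'I_n -> 'I_n). *)
Definition lhs_expect (R : realType) (mu : nat -> R) (n m : nat)
    (f : {ffun 'I_m -> int} -> R) : R :=
  \sum_(d : {ffun 'I_n -> 'I_n} | (\sum_(i < n) (d i : nat))%N == n.-1)
    ((\prod_(i < n) mu (d i)) / conv_pow mu n n.-1) *
    \sum_(sigma : 'S_(size (pos_entries d)))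
       sb_perm_prob R sigma *
       (if (m <= size (pos_entries d))%N then
          f [ffun i : 'I_m => ((nth 0%N (sb_reorder sigma) i) : int)]
        else 0).

(* Theta^n(k_1,...,k_m), 0-indexed: factor i (0 <= i < m) is
   (n - i) / (n - 1 - sum_{j<i} k_j) *)
Definition Theta (R : realType) (mu : nat -> R) (n m : nat) (k : 'I_m -> nat) : R :=
  if (\sum_(i < m) k i <= n.-1)%N then
    conv_pow mu (n - m) (n.-1 - \sum_(i < m) k i)%N / conv_pow mu n n.-1 *
    \prod_(i < m) ((n - i)%:R / (n.-1 - \sum_(j < m | (j < i)%N) k j)%:R)
  else 0.

(* E[ f(barxi_1..barxi_m) Theta^n(barxi_1..barxi_m) ] with barxi i.i.d. of law
   P(barxi = k) = k mu_k.  Theta vanishes unless sum k_i <= n-1, so only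
   k with all k_i <= n-1 contribute; the sum is restricted to those. *)
Definition rhs_expect (R : realType) (mu : nat -> R) (n m : nat)
    (f : {ffun 'I_m -> int} -> R) : R :=
  \sum_(k : {ffun 'I_m -> 'I_n})
     (\prod_(i < m) ((k i : nat)%:R * mu (k i))) *
     f [ffun i : 'I_m => ((k i : nat) : int)] *
     Theta mu n (fun i => (k i : nat)).

Arguments lhs_expect {R} mu n m f.
Arguments rhs_expect {R} mu n m f.
Arguments Theta {R} mu n m k.
Arguments conv_pow {R} mu r j.

(* Main.v *)
Require Import Defs.
From mathcomp Require Import all_boot all_order all_algebra all_fingroup.
From mathcomp Require Import all_classical all_reals all_analysis.
From mathcomp Require Import zify ring lra.
Import Order.TTheory GRing.Theory Num.Theory.
Local Open Scope ring_scope.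

Notation fpos s := [seq x <- s | (0 < x)%N].

Section S.
Variable R : realType.

Fixpoint SL (B L : nat) (F : seq nat -> R) : R :=
  match L with
  | O => F [::]
  | L'.+1 => \sum_(a < B) SL B L' (fun r => F ((a : nat) :: r))
  end.

Lemma SL_ext B L F G : (forall x, size x = L -> F x = G x) -> SL B L F = SL B L G.
Proof.
elim: L F G => [|L IH] F G H /=; first by rewrite H.
by apply: eq_bigr => a _; apply: IH => x sx; rewrite H //= sx.
Qed.

Lemma SL_add B L F G : SL B L (fun x => F x + G x) = SL B L F + SL B L G.
Proof.
elim: L F G => [|L IH] F G //=.
by rewrite -big_split /=; apply: eq_bigr => a _; rewrite IH.
Qed.

Lemma SL_scale B L c F : SL B L (fun x => c * F x) = c * SL B L F.
Proof.
elim: L F => [|L IH] F //=.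
by rewrite mulr_sumr; apply: eq_bigr => a _; rewrite IH.
Qed.

Lemma SL_sum B L n (F : 'I_n -> seq nat -> R) :
  SL B L (fun x => \sum_(i < n) F i x) = \sum_(i < n) SL B L (F i).
Proof.
elim: L F => [|L IH] F //=.
rewrite exchange_big /=; apply: eq_bigr => a _; exact: IH.
Qed.

Lemma SL_0 B L : SL B L (fun _ => 0) = 0.
Proof. by elim: L => //= L IH; rewrite big1. Qed.


Definition rem_at (j : nat) (s : seq nat) := take j s ++ drop j.+1 s.

Lemma rem_at_cons j a s : rem_at j.+1 (a :: s) = a :: rem_at j s.
Proof. by []. Qed.

Lemma rem_at0 a s : rem_at 0 (a :: s) = s.
Proof. by rewrite /rem_at /= drop0. Qed.

Lemma sum_picks_cons (H : nat -> seq nat -> R) a r :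
  \sum_(k < size (a :: r)) H (nth 0%N (a :: r) k) (rem_at k (a :: r)) =
  H a r + \sum_(k < size r) H (nth 0%N r k) (a :: rem_at k r).
Proof.
by rewrite /= big_ord_recl /= rem_at0.
Qed.

Lemma exch_P B L (w : seq nat -> R) (H : nat -> seq nat -> R) :
  (forall x y, perm_eq x y -> w x = w y) ->
  SL B L (fun x => w x * \sum_(k < size x) H (nth 0%N x k) (rem_at k x)) =
  L%:R * \sum_(a < B) SL B L.-1 (fun r => w ((a : nat) :: r) * H a r).
Proof.
elim: L w H => [|L IH] w H wsym /=; first by rewrite big_ord0 mulr0 mul0r.
under eq_bigr => a _.
  rewrite (@SL_ext B L _ (fun r => w ((a:nat) :: r) * H a r +
     w ((a:nat) :: r) * \sum_(k < size r) H (nth 0%N r k) ((a:nat) :: rem_at k r))); last first.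
    by move=> x _; rewrite sum_picks_cons mulrDr.
  rewrite SL_add (IH (fun r => w ((a:nat) :: r)) (fun y r => H y ((a:nat) :: r))); last first.
    by move=> x y pxy; apply: wsym; rewrite perm_cons.
  over.
rewrite big_split /=.
case: L {IH} => [|L].
  by rewrite [X in _ + X]big1 ?addr0 ?mul1r // => a _; rewrite mul0r.
rewrite -mulr_sumr -[in RHS](addn1 L.+1) natrD mulrDl mul1r addrC.
congr (_ + _); congr (_ * _) => /=.
rewrite exchange_big /=; apply: eq_bigr => b _; apply: eq_bigr => a _.
apply: SL_ext => x _; congr (_ * _); apply: wsym.
by rewrite (perm_catCA [:: _] [:: _] x).
Qed.


Lemma SL_conv (mu : nat -> R) B L T : (T < B)%N ->
  SL B L (fun x => (sumn x == T)%:R * \prod_(y <- x) mu y) = conv_pow mu L T.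
Proof.
elim: L T => [|L IH] T hT.
  by rewrite /= big_nil mulr1 eq_sym; case: (T == 0%N).
rewrite /= (big_ord_widen B (fun i => mu i * conv_pow mu L (T - i))) //.
rewrite [RHS]big_mkcond /=; apply: eq_bigr => a _.
rewrite (@SL_ext B L _ (fun r => ((a <= T)%N)%:R * mu (a : nat) * ((sumn r == (T - a)%N)%:R * \prod_(y <- r) mu y))); last first.
  move=> x _; rewrite big_cons /=.
  case: (leqP a T) => haT.
    have -> : ((a + sumn x)%N == T) = (sumn x == (T - a)%N) by apply/eqP/eqP; lia.
    by rewrite mul1r; ring.
  have -> : ((a + sumn x)%N == T) = false by apply/eqP; lia.
  by rewrite !mul0r.
rewrite SL_scale IH; last by apply: leq_ltn_trans (leq_subr a T) hT.
by rewrite ltnS; case: (a <= T)%N; rewrite ?mul1r ?mul0r.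
Qed.

Fixpoint Q (T : nat) (s : seq nat) (m : nat) (g : seq nat -> R) : R :=
  match m with
  | O => g [::]
  | m'.+1 => \sum_(j < size s) ((nth 0%N s j)%:R / T%:R *
       Q (T - nth 0%N s j) (rem_at j s) m' (fun r => g (nth 0%N s j :: r)))
  end.

Definition WT (mu : nat -> R) (T : nat) (x : seq nat) : R :=
  (sumn x == T)%:R * \prod_(y <- x) mu y.

Definition Th (mu : nat -> R) (L T m : nat) (y : seq nat) : R :=
  ((sumn y <= T)%N)%:R * conv_pow mu (L - m) (T - sumn y) *
  \prod_(i < m) ((L - i)%:R / (T - sumn (take i y))%:R).

Lemma WT_cons mu T a r :
  WT mu T (a :: r) = ((a <= T)%N)%:R * mu a * WT mu (T - a) r.
Proof.
rewrite /WT big_cons /=.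
case: (leqP a T) => haT.
  have -> : ((a + sumn r)%N == T) = (sumn r == (T - a)%N) by apply/eqP/eqP; lia.
  by rewrite mul1r; ring.
have -> : ((a + sumn r)%N == T) = false by apply/eqP; lia.
by rewrite !mul0r.
Qed.

Lemma WT_perm mu T x y : perm_eq x y -> WT mu T x = WT mu T y.
Proof. by move=> pxy; rewrite /WT (perm_sumn pxy) (perm_big _ pxy). Qed.

Lemma claimD mu B m : forall L T g, (T < B)%N ->
  SL B L (fun x => WT mu T x * Q T x m g) =
  SL B m (fun y => \prod_(a <- y) (a%:R * mu a) * g y * Th mu L T m y).
Proof.
elim: m => [|m IH] L T g hT.
  rewrite /= (@SL_ext B L _ (fun x => g [::] * WT mu T x)); last by move=> x _; rewrite mulrC.
  rewrite SL_scale SL_conv // /Th big_nil big_ord0 !subn0 /=.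
  by rewrite !mul1r mulr1.
rewrite [LHS](exch_P B L (WT mu T)
   (fun y r => y%:R / T%:R * Q (T - y) r m (fun r => g (y :: r)))); last first.
  by move=> x y; apply: WT_perm.
rewrite /= mulr_sumr; apply: eq_bigr => -[a ha] _ /=.
rewrite (@SL_ext B L.-1 _ (fun r => (((a <= T)%N)%:R * mu a * (a%:R / T%:R)) *
   (WT mu (T - a) r * Q (T - a) r m (fun r => g (a :: r))))); last first.
  by move=> x _; rewrite WT_cons; ring.
rewrite SL_scale.
case: (leqP a T) => haT; last first.
  rewrite !mul0r mulr0 -(SL_0 B m); apply: SL_ext => y _.
  by rewrite /Th /= ltn_geF ?mul0r ?mulr0 //; apply: leq_trans (leq_addr _ _).
rewrite IH; last by apply: leq_ltn_trans (leq_subr a T) hT.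
rewrite -!SL_scale; apply: SL_ext => y _.
rewrite /Th big_cons big_ord_recl /= subn0 mul1r.
have -> : (((a + sumn y)%N <= T)%N) = ((sumn y <= T - a)%N) by apply/idP/idP; lia.
have -> : (L - m.+1)%N = (L.-1 - m)%N by lia.
have -> : (T - (a + sumn y))%N = (T - a - sumn y)%N by lia.
have -> : \prod_(i < m) ((L - bump 0 i)%:R / (T - (a + sumn (take i y)))%:R) =
          \prod_(i < m) ((L.-1 - i)%:R / (T - a - sumn (take i y))%:R) :> R.
  by apply: eq_bigr => i _; congr (_%:R / _%:R); rewrite /bump /=; lia.
by rewrite subn0; ring.
Qed.


Lemma pick_filter s : forall (Phi : nat -> seq nat -> R),
  (forall y r, Phi y r = Phi y (fpos r)) -> (forall r, Phi 0%N r = 0) ->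
  \sum_(k < size s) Phi (nth 0%N s k) (rem_at k s) =
  \sum_(k < size (fpos s)) Phi (nth 0%N (fpos s) k) (rem_at k (fpos s)).
Proof.
elim: s => [|x s IH] Phi Hf H0 //.
rewrite sum_picks_cons (IH (fun y r => Phi y (x :: r))); first last.
- by move=> r; apply: H0.
- move=> y r; rewrite Hf [RHS]Hf /=; congr (Phi y _).
  by case: (0 < x)%N => //=; rewrite filter_id.
case: (posnP x) => hx.
  rewrite hx H0 add0r /=; apply: eq_bigr => k _.
  by rewrite Hf [RHS]Hf /=.
rewrite /= hx sum_picks_cons; congr (_ + _).
by rewrite Hf [RHS]Hf filter_id.
Qed.

Lemma Q_filter m : forall T s g, Q T s m g = Q T (fpos s) m g.
Proof.
elim: m => [|m IH] T s g //=.
apply: (pick_filter s (fun y r => y%:R / T%:R * Q (T - y) r m (fun r => g (y :: r)))).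
  by move=> y r; rewrite IH.
by move=> r; rewrite mulr0n !mul0r.
Qed.

Definition sbp N (s : seq nat) (sigma : 'S_N) : R :=
  \prod_(i < N) ((nth 0%N s (sigma i))%:R /
       \sum_(j < N | (i <= j)%N) (nth 0%N s (sigma j))%:R).

Definition reord N (s : seq nat) (sigma : 'S_N) : seq nat :=
  [seq nth 0%N s (sigma i) | i <- enum 'I_N].

Arguments sbp {N} s sigma.
Arguments reord {N} s sigma.

Lemma nth_rem_at s j k : (j < size s)%N ->
  nth 0%N (rem_at j s) k = nth 0%N s (bump j k).
Proof.
move=> hj; rewrite /rem_at nth_cat size_take hj /bump.
case: (ltnP k j) => hk.
  by rewrite nth_take // (leqNgt j k) hk add0n.
rewrite nth_drop; congr nth; rewrite add1n; lia.
Qed.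

Lemma sum_nth_natr s : \sum_(i < size s) (nth 0%N s i)%:R = (sumn s)%:R :> R.
Proof.
rewrite sumnE natr_sum (big_nth 0%N) big_mkord.
by apply: eq_bigr.
Qed.

Lemma R1 N s (H : seq nat -> R) : size s = N.+1 ->
  \sum_(sigma : 'S_N.+1) sbp s sigma * H (reord s sigma) =
  \sum_(j < N.+1) ((nth 0%N s j)%:R / (sumn s)%:R *
     \sum_(sigma : 'S_N) sbp (rem_at j s) sigma *
        H (nth 0%N s j :: reord (rem_at j s) sigma)).
Proof.
move=> hs.
rewrite (partition_big (fun sigma : 'S_N.+1 => sigma ord0) predT) //=.
apply: eq_bigr => j0 _; rewrite mulr_sumr.
rewrite (reindex (lift_perm ord0 j0)); last first.
  pose ulsf i (t : 'S_N.+1) k := odflt k (unlift (t i) (t (lift i k))).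
  have ulsfK i (t : 'S_N.+1) k: lift (t i) (ulsf i t k) = t (lift i k).
    rewrite /ulsf; have:= neq_lift i k.
    by rewrite -(can_eq (permK t)) => /unlift_some[] ? ? ->.
  have inj_ulsf: injective (ulsf ord0 _).
    move=> s0; apply: can_inj (ulsf (s0 ord0) s0^-1%g) _ => k'.
    by rewrite {1}/ulsf ulsfK !permK liftK.
  exists (fun t => perm (inj_ulsf t)) => [s0 _ | s0].
    by apply/permP=> k'; rewrite permE /ulsf lift_perm_lift lift_perm_id liftK.
  move/(s0 _ =P _) => si0; apply/permP=> k.
  case: (unliftP ord0 k) => [k'|] ->; rewrite ?lift_perm_id //.
  by rewrite lift_perm_lift -si0 permE ulsfK.
apply: eq_big => [s' | s' _]; first by rewrite lift_perm_id eqxx.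
have hj0 : (j0 < size s)%N by rewrite hs.
have Hre : reord s (lift_perm ord0 j0 s') = nth 0%N s j0 :: reord (rem_at j0 s) s'.
  rewrite /reord enum_ordSl /= lift_perm_id -map_comp; congr (_ :: _).
  apply: eq_map => k /=; rewrite lift_perm_lift nth_rem_at //.
rewrite Hre mulrA; congr (_ * _).
rewrite /sbp big_ord_recl lift_perm_id; congr (_ * _).
  congr (_ / _).
  rewrite (eq_bigl (fun _ => true)) //.
  have := sum_nth_natr s; rewrite hs => <-.
  by rewrite [RHS](reindex_inj (@perm_inj _ (lift_perm ord0 j0 s'))).
apply: eq_bigr => i _.
rewrite lift_perm_lift -nth_rem_at //; congr (_ / _).
rewrite big_mkcond big_ord_recl /= add0r [RHS]big_mkcond.
apply: eq_bigr => k _; rewrite lift_perm_lift -nth_rem_at //.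
Qed.

Lemma size_rem_at j s : (j < size s)%N -> size (rem_at j s) = (size s).-1.
Proof. move=> hj; rewrite /rem_at size_cat size_take size_drop hj; lia. Qed.

Lemma sumn_rem_at j s : (j < size s)%N -> sumn (rem_at j s) = (sumn s - nth 0%N s j)%N.
Proof.
move=> hj; rewrite /rem_at sumn_cat.
have := cat_take_drop j s; rewrite (drop_nth 0%N hj) => e.
rewrite -[sumn s](congr1 sumn e) sumn_cat /=; lia.
Qed.

Lemma all_rem_at (p : pred nat) j s : all p s -> all p (rem_at j s).
Proof.
move=> /allP hs; rewrite /rem_at all_cat; apply/andP; split; apply/allP => x hx; apply: hs.
  exact: mem_take hx.
exact: mem_drop hx.
Qed.

Lemma sbp_sum1 N : forall s, size s = N -> all (fun x => 0 < x)%N s ->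
  \sum_(sigma : 'S_N) sbp s sigma = 1.
Proof.
elim: N => [|N IH] s hs hpos.
  rewrite /sbp (eq_bigr (fun _ => 1)); last by move=> i _; rewrite big_ord0.
  by rewrite sumr_const card_Sn.
rewrite (eq_bigr (fun sigma => sbp s sigma * (fun _ => 1) (reord s sigma))); last first.
  by move=> i _; rewrite mulr1.
rewrite (R1 _ _ (fun _ => 1)) //.
rewrite (eq_bigr (fun j : 'I_N.+1 => (nth 0%N s j)%:R / (sumn s)%:R)); last first.
  move=> j _; rewrite (eq_bigr (fun sigma => sbp (rem_at j s) sigma)); last by move=> i _; rewrite mulr1.
  rewrite IH ?mulr1 //; last exact: all_rem_at.
  by rewrite size_rem_at hs.
rewrite -mulr_suml.
have := sum_nth_natr s; rewrite hs => ->.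
apply: divff; rewrite pnatr_eq0 -lt0n.
case: s hs hpos => // x s' _ /= /andP [hx _]; exact: ltn_addr.
Qed.

Lemma E_Q m : forall N s g, size s = N -> all (fun x => 0 < x)%N s ->
  \sum_(sigma : 'S_N) sbp s sigma *
     (if (m <= N)%N then g (take m (reord s sigma)) else 0) = Q (sumn s) s m g.
Proof.
elim: m => [|m IH] N s g hs hpos.
  rewrite /= (eq_bigr (fun sigma => sbp s sigma * g [::])); last by move=> i _; rewrite take0.
  by rewrite -mulr_suml sbp_sum1 // mul1r.
case: N hs => [|N] hs.
  rewrite /= big1 ?mulr0 //; last by move=> i _; rewrite mulr0.
  by rewrite hs big_ord0.
rewrite (R1 _ _ (fun r => if (m.+1 <= N.+1)%N then g (take m.+1 r) else 0)) //=.
rewrite hs; apply: eq_bigr => j _; congr (_ * _).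
have hj : (j < size s)%N by rewrite hs.
rewrite -(sumn_rem_at _ _ hj) -(IH N); last exact: all_rem_at.
  by apply: eq_bigr => sigma _; rewrite ltnS.
by rewrite size_rem_at hs.
Qed.

Lemma sum_ffun_SL B L : forall (F : seq nat -> R),
  \sum_(d : {ffun 'I_L -> 'I_B}) F [seq (d i : nat) | i <- enum 'I_L] = SL B L F.
Proof.
elim: L => [|L IH] F.
  have -> : enum 'I_0 = [::] by apply/eqP; rewrite -size_eq0 size_enum_ord.
  by rewrite (eq_bigr (fun _ => F [::])) // sumr_const card_ffun !card_ord expn0 mulr1n.
pose h (p : 'I_B * {ffun 'I_L -> 'I_B}) : {ffun 'I_L.+1 -> 'I_B} :=
  [ffun i => if unlift ord0 i is Some k then p.2 k else p.1].
have hb : bijective h.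
  exists (fun d : {ffun 'I_L.+1 -> 'I_B} => (d ord0, [ffun k => d (lift ord0 k)])).
    move=> [a d'] /=; congr (_, _); first by rewrite /h ffunE unlift_none.
    by apply/ffunP => k; rewrite !ffunE liftK.
  move=> d; apply/ffunP => i; rewrite /h !ffunE /=.
  by case: (unliftP ord0 i) => [k|] -> //; rewrite ffunE.
rewrite (reindex h); last by apply: onW_bij.
rewrite -(pair_big xpredT xpredT (fun a d' => F [seq (h (a, d') i : nat) | i <- enum 'I_L.+1])) /=.
apply: eq_bigr => a _; rewrite -IH; apply: eq_bigr => d' _.
congr F; rewrite enum_ordSl /= /h ffunE unlift_none; congr (_ :: _).
by rewrite -map_comp; apply: eq_map => k /=; rewrite ffunE liftK.
Qed.

Lemma sumn_fpos s : sumn (fpos s) = sumn s.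
Proof. by elim: s => //= x s IH; case: (posnP x) => hx /=; rewrite IH ?hx. Qed.

Lemma sumn_take_big (y : seq nat) m i : size y = m ->
  sumn (take i y) = (\sum_(j < m | (j < i)%N) nth 0%N y j)%N.
Proof.
move=> hy; rewrite sumnE (big_nth 0%N) big_mkord.
rewrite (big_ord_widen m (fun j => nth 0%N (take i y) j)); last by rewrite size_take_min; lia.
rewrite big_mkcond [RHS]big_mkcond; apply: eq_bigr => j _ /=.
case: (ltnP j i) => hji.
  have hj := ltn_ord j; rewrite size_take_min (_ : (j < minn i (size y))%N) ?nth_take //; lia.
have hj := ltn_ord j; by rewrite size_take_min ifF //; apply/negbTE; lia.
Qed.

Lemma sumn_map_enum n (d : 'I_n -> nat) : sumn [seq d i | i <- enum 'I_n] = (\sum_(i < n) d i)%N.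
Proof. by rewrite sumnE big_map big_enum. Qed.

Lemma prod_map_enum n (F : nat -> R) (d : 'I_n -> nat) :
  \prod_(y <- [seq d i | i <- enum 'I_n]) F y = \prod_(i < n) F (d i).
Proof. by rewrite big_map big_enum. Qed.

Lemma nth_map_enum n (d : 'I_n -> nat) (i : 'I_n) :
  nth 0%N [seq d i | i <- enum 'I_n] i = d i.
Proof. by rewrite (nth_map i) ?size_enum_ord // nth_ord_enum. Qed.

End S.
Arguments SL {R}.
Arguments Q {R}.
Arguments WT {R}.
Arguments Th {R}.
Arguments sbp {R N}.
Arguments reord {N}.

Theorem proposition4p3 (R : realType) (mu : nat -> R) (n m : nat)
  (f : {ffun 'I_m -> int} -> R) :
  is_law mu -> support_gcd1 mu -> critical mu ->
  0 < conv_pow mu n n.-1 ->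
  (1 <= m)%N -> (m < n)%N ->
  (forall x, 0 <= f x) ->
  lhs_expect mu n m f = rhs_expect mu n m f.
Proof.
move=> _ _ _ _ hm hmn _.
set Z := conv_pow mu n n.-1.
pose g := fun r : seq nat => f [ffun i : 'I_m => ((nth 0%N r i : nat) : int)].
have hL : lhs_expect mu n m f = Z^-1 * SL n n (fun x => WT mu n.-1 x * Q n.-1 x m g).
  rewrite /lhs_expect big_mkcond -SL_scale -sum_ffun_SL; apply: eq_bigr => d _.
  rewrite /WT sumn_map_enum prod_map_enum.
  case: eqP => hsum; last by rewrite mulr0n !mul0r mulr0.
  have hpos : pos_entries d = fpos [seq (d i : nat) | i <- enum 'I_n] by rewrite filter_map.
  rewrite (eq_bigr (fun sigma : 'S_(size (pos_entries d)) => sbp (pos_entries d) sigma *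
      (if (m <= size (pos_entries d))%N then g (take m (reord (pos_entries d) sigma)) else 0))); last first.
    move=> sigma _; congr (_ * _); case: ifP => // _.
    by rewrite /g; congr f; apply/ffunP => i; rewrite !ffunE nth_take.
  rewrite E_Q //; last by rewrite hpos filter_all.
  rewrite hpos -Q_filter sumn_fpos sumn_map_enum hsum /=.
  by rewrite /Z; ring.
have hR : rhs_expect mu n m f =
    Z^-1 * SL n m (fun y => \prod_(a <- y) (a%:R * mu a) * g y * Th mu n n.-1 m y).
  rewrite /rhs_expect -SL_scale -sum_ffun_SL; apply: eq_bigr => k _.
  rewrite (@prod_map_enum _ _ (fun a => a%:R * mu a)).
  have -> : g [seq (k i : nat) | i <- enum 'I_m] = f [ffun i => ((k i : nat) : int)].
    by rewrite /g; congr f; apply/ffunP => i; rewrite !ffunE nth_map_enum.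
  rewrite /Theta /Th sumn_map_enum.
  have -> : \prod_(i < m) ((n - i)%:R /
        (n.-1 - sumn (take i [seq (k i : nat) | i <- enum 'I_m]))%:R) =
      \prod_(i < m) ((n - i)%:R / (n.-1 - \sum_(j < m | (j < i)%N) k j)%:R) :> R.
    apply: eq_bigr => i _; rewrite (sumn_take_big _ _ _ (size_map _ _)) size_enum_ord.
    by congr (_ / (_ - _)%:R); apply: eq_bigr => j _; rewrite nth_map_enum.
  by case: ifP => _; rewrite /Z /= ?mulr1n ?mulr0n; ring.
rewrite hL hR claimD //; lia.
Qed.
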